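(* Let $f(x_1,x_2)=(-2+x_1+x_2)^2$ and $g(x_1,x_2)=1-x_1^2-x_2^2$. Although $f>0$ on $\{x\in\mathbb{R}^2: g(x)\geqslant 0\}$, there do not exist SDSOS polynomials $\sigma_0,\sigma_1$ (of any degree) such that $f=\sigma_0+\sigma_1 g$. Consequently there also do not exist DSOS polynomials $\sigma_0,\sigma_1$ with $f=\sigma_0+\sigma_1 g$.
   Context: For $\alpha\in\mathbb{N}^2$ write $x^\alpha=x_1^{\alpha_1}x_2^{\alpha_2}$. A polynomial is SDSOS (scaled diagonally-dominant sum of squares) if it is of the form $\sum_k (p_k x^{\alpha(k)}+q_k x^{\beta(k)})^2$ (finite sum) with $p_k,q_k\in\mathbb{R}$ and $\alpha(k),\beta(k)\in\mathbb{N}^2$. A polynomial is DSOS (diagonally-dominant sum of squares) if it is a finite nonnegative combination of polynomials of the forms $(x^\alpha)^2$, $(x^\alpha+x^\beta)^2$, $(x^\alpha-x^\beta)^2$ with $\alpha,\beta\in\mathbb{N}^2$; every DSOS polynomial is SDSOS. *)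

(* Defs.v *)
From HB Require Import structures.
From mathcomp Require Import all_boot all_algebra.
From mathcomp Require Import reals.
From mathcomp Require Import mpoly.
Set Implicit Arguments. Unset Strict Implicit. Unset Printing Implicit Defensive.
Import GRing.Theory Num.Theory.
Local Open Scope ring_scope.

Section Defs.
Variable R : realType.

Definition SDSOS (s : {mpoly R[2]}) : Prop :=
  exists l : seq (R * R * 'X_{1..2} * 'X_{1..2}),
    s = \sum_(t <- l) (t.1.1.1 *: 'X_[t.1.2] + t.1.1.2 *: 'X_[t.2]) ^+ 2.

Definition DSOS (s : {mpoly R[2]}) : Prop :=
  exists (l1 : seq (R * 'X_{1..2}))
         (l2 l3 : seq (R * 'X_{1..2} * 'X_{1..2})),
    (forall t, t \in l1 -> 0 <= t.1) /\
    (forall t, t \in l2 -> 0 <= t.1.1) /\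
    (forall t, t \in l3 -> 0 <= t.1.1) /\
    s = \sum_(t <- l1) t.1 *: ('X_[t.2]) ^+ 2
      + \sum_(t <- l2) t.1.1 *: ('X_[t.1.2] + 'X_[t.2]) ^+ 2
      + \sum_(t <- l3) t.1.1 *: ('X_[t.1.2] - 'X_[t.2]) ^+ 2.

(* f(x1,x2) = (-2 + x1 + x2)^2 ; g(x1,x2) = 1 - x1^2 - x2^2.
   Variable x1 is 'X_0, x2 is 'X_1. *)
Definition fpoly : {mpoly R[2]} := (- 2%:MP + 'X_0 + 'X_1) ^+ 2.
Definition gpoly : {mpoly R[2]} := 1 - 'X_0 ^+ 2 - 'X_1 ^+ 2.

End Defs.

(* Main.v *)
Require Import Defs.
From HB Require Import structures.
From mathcomp Require Import all_boot all_algebra.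
From mathcomp Require Import reals.
From mathcomp Require Import mpoly.
From mathcomp Require Import ring lra.
Import GRing.Theory Num.Theory.
Local Open Scope ring_scope.

Section Aux.
Variable R : realType.

Definition pt (u v : R) : 'I_2 -> R := fun i => if val i == 0%N then u else v.

Lemma meval_pt_X (u v : R) (m : 'X_{1..2}) :
  ('X_[m] : {mpoly R[2]}).@[pt u v] = u ^+ m ord0 * v ^+ m ord_max.
Proof.
rewrite mevalX big_ord_recr big_ord1 /=.
have -> : widen_ord (leqnSn 1) ord0 = ord0 :> 'I_2 by apply/val_inj.
by rewrite /pt /=.
Qed.

Definition r : R := 3 / 5.

Definition Lv (s : {mpoly R[2]}) : R :=
  s.@[pt r r] + s.@[pt (-r) r] + s.@[pt r (-r)] - s.@[pt (-r) (-r)].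

Definition Q (s : {mpoly R[2]}) : Prop := 0 <= Lv s.

Lemma Q0 : Q 0.
Proof. by rewrite /Q /Lv !meval0 !addr0 subr0. Qed.

Lemma QD s t : Q s -> Q t -> Q (s + t).
Proof.
rewrite /Q /Lv !mevalD => h1 h2.
have -> : s.@[pt r r] + t.@[pt r r] + (s.@[pt (- r) r] + t.@[pt (- r) r]) +
  (s.@[pt r (- r)] + t.@[pt r (- r)]) - (s.@[pt (- r) (- r)] + t.@[pt (- r) (- r)])
  = (s.@[pt r r] + s.@[pt (- r) r] + s.@[pt r (- r)] - s.@[pt (- r) (- r)]) +
    (t.@[pt r r] + t.@[pt (- r) r] + t.@[pt r (- r)] - t.@[pt (- r) (- r)]).
  by ring.
exact: addr_ge0.
Qed.

Lemma QZ c s : 0 <= c -> Q s -> Q (c *: s).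
Proof.
rewrite /Q /Lv !mevalZ => c0 h.
have -> : c * s.@[pt r r] + c * s.@[pt (- r) r] + c * s.@[pt r (- r)] - c * s.@[pt (- r) (- r)]
  = c * (s.@[pt r r] + s.@[pt (- r) r] + s.@[pt r (- r)] - s.@[pt (- r) (- r)]).
  by ring.
exact: mulr_ge0.
Qed.

Lemma Qsum (T : eqType) (l : seq T) (F : T -> {mpoly R[2]}) :
  (forall t, t \in l -> Q (F t)) -> Q (\sum_(t <- l) F t).
Proof.
elim: l => [|a l IH] H; first by rewrite big_nil; exact: Q0.
rewrite big_cons; apply: QD; first by apply: H; rewrite inE eqxx.
by apply: IH => t tl; apply: H; rewrite inE tl orbT.
Qed.

Lemma sgn_cases n : (-1) ^+ n = 1 :> R \/ (-1) ^+ n = -1 :> R.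
Proof. by rewrite -signr_odd; case: (odd n); [right; rewrite expr1|left; rewrite expr0]. Qed.

Lemma Qterm (p q : R) (a b : 'X_{1..2}) :
  Q ((p *: 'X_[a] + q *: 'X_[b]) ^+ 2).
Proof.
have E x : ((p *: 'X_[a] + q *: 'X_[b]) ^+ 2 : {mpoly R[2]}).@[x]
    = ((p *: 'X_[a] + q *: 'X_[b] : {mpoly R[2]}).@[x]) ^+ 2.
  by rewrite !expr2 mevalM.
rewrite /Q /Lv !E !mevalD !mevalZ !meval_pt_X !(exprNn r).
move: (r ^+ a ord0) (r ^+ a ord_max) (r ^+ b ord0) (r ^+ b ord_max) => x0 x1 y0 y1.
have [->|->] := sgn_cases (a ord0); have [->|->] := sgn_cases (a ord_max);
have [->|->] := sgn_cases (b ord0); have [->|->] := sgn_cases (b ord_max);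
  have h := sqr_ge0 (p * (x0 * x1) + q * (y0 * y1));
  have h' := sqr_ge0 (p * (x0 * x1) - q * (y0 * y1)); lra.
Qed.

Lemma SDSOS_Q s : SDSOS s -> Q s.
Proof.
move=> [l ->]; apply: Qsum => t _; exact: Qterm.
Qed.

Lemma DSOS_Q s : DSOS s -> Q s.
Proof.
move=> [l1 [l2 [l3 [H1 [H2 [H3 ->]]]]]].
apply: QD; first apply: QD.
- apply: Qsum => t /H1 h; apply: QZ => //.
  have -> : ('X_[t.2] : {mpoly R[2]}) = 1 *: 'X_[t.2] + 0 *: 'X_[t.2].
    by rewrite scale1r scale0r addr0.
  exact: Qterm.
- apply: Qsum => t /H2 h; apply: QZ => //.
  have -> : ('X_[t.1.2] + 'X_[t.2] : {mpoly R[2]}) = 1 *: 'X_[t.1.2] + 1 *: 'X_[t.2].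
    by rewrite !scale1r.
  exact: Qterm.
- apply: Qsum => t /H3 h; apply: QZ => //.
  have -> : ('X_[t.1.2] - 'X_[t.2] : {mpoly R[2]}) = 1 *: 'X_[t.1.2] + (-1) *: 'X_[t.2].
    by rewrite scale1r scaleN1r.
  exact: Qterm.
Qed.

Lemma f_eval (x : 'I_2 -> R) :
  (fpoly R).@[x] = (-2 + x 0 + x 1) ^+ 2.
Proof.
by rewrite /fpoly !expr2 mevalM !mevalD mevalN mevalC !mevalXU.
Qed.

Lemma g_eval (x : 'I_2 -> R) :
  (gpoly R).@[x] = 1 - x 0 ^+ 2 - x 1 ^+ 2.
Proof.
by rewrite /gpoly !expr2 !mevalB !mevalM meval1 !mevalXU.
Qed.

Lemma pt0 (u v : R) : pt u v 0 = u. Proof. by []. Qed.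
Lemma pt1 (u v : R) : pt u v 1 = v. Proof. by []. Qed.

Lemma noQ s0 s1 : Q s0 -> Q s1 -> fpoly R <> s0 + s1 * gpoly R.
Proof.
rewrite /Q /Lv => h0 h1 E.
have K u v : (fpoly R).@[pt u v] = s0.@[pt u v] + s1.@[pt u v] * (gpoly R).@[pt u v].
  by rewrite E mevalD mevalM.
have := K r r; have := K (-r) r; have := K r (-r); have := K (-r) (-r).
rewrite !f_eval !g_eval !pt0 !pt1 !sqrrN.
move: h0 h1.
move: (s0.@[pt r r]) (s0.@[pt (-r) r]) (s0.@[pt r (-r)]) (s0.@[pt (-r) (-r)]) => a1 a2 a3 a4.
move: (s1.@[pt r r]) (s1.@[pt (-r) r]) (s1.@[pt r (-r)]) (s1.@[pt (-r) (-r)]) => b1 b2 b3 b4.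
rewrite /r => h0 h1 k1 k2 k3 k4.
clear E K.
lra.
Qed.

End Aux.

Theorem mainTheorem3 (R : realType) :
  (forall x : 'I_2 -> R, 0 <= (gpoly R).@[x] -> 0 < (fpoly R).@[x]) /\
  ~ (exists s0 s1 : {mpoly R[2]},
       SDSOS s0 /\ SDSOS s1 /\ fpoly R = s0 + s1 * gpoly R) /\
  ~ (exists s0 s1 : {mpoly R[2]},
       DSOS s0 /\ DSOS s1 /\ fpoly R = s0 + s1 * gpoly R).
Proof.
split; last split.
- move=> x; rewrite f_eval g_eval => h.
  set a := x 0 in h *; set b := x 1 in h *.
  have : -2 + a + b != 0 by apply/eqP => e; have := sqr_ge0 (a - b); nra.
  move=> ne; rewrite lt0r sqrf_eq0 ne /=; exact: sqr_ge0.
- move=> [s0 [s1 [h0 [h1 E]]]].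
  exact: (@noQ R s0 s1 (@SDSOS_Q R s0 h0) (@SDSOS_Q R s1 h1) E).
- move=> [s0 [s1 [h0 [h1 E]]]].
  exact: (@noQ R s0 s1 (@DSOS_Q R s0 h0) (@DSOS_Q R s1 h1) E).
Qed.
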